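(* Let $A_1,A_2,A_3$ be $m\times m$ complex positive semidefinite matrices. Then $$\operatorname{per}(A_1+A_2+A_3)+\operatorname{per}A_1+\operatorname{per}A_2+\operatorname{per}A_3\;\ge\;\operatorname{per}(A_1+A_2)+\operatorname{per}(A_1+A_3)+\operatorname{per}(A_2+A_3).$$
   Context: The permanent of an $m\times m$ matrix $X=(x_{ij})$ is $\operatorname{per}X=\sum_{\sigma\in S_m}\prod_{t=1}^m x_{t\,\sigma(t)}$. *)

(* Defs.v *)
(* Complex numbers: an arbitrary numClosedFieldType C
   (e.g. algC); conjugation is Num.conj (notation z^* ). *)
From HB Require Import structures.
From mathcomp Require Import all_boot all_order all_algebra all_fingroup.
Set Implicit Arguments. Unset Strict Implicit. Unset Printing Implicit Defensive.
Import Order.TTheory GRing.Theory Num.Theory.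
Local Open Scope ring_scope.

Definition permanent (R : comNzRingType) (m : nat) (X : 'M[R]_m) : R :=
  \sum_(s : 'S_m) \prod_(t < m) X t (s t).

Definition adjmx (C : numClosedFieldType) (p q : nat) (A : 'M[C]_(p, q))
  : 'M[C]_(q, p) := \matrix_(i, j) (A j i)^*.

Definition psdmx (C : numClosedFieldType) (m : nat) (A : 'M[C]_m) : Prop :=
  adjmx A = A /\ forall x : 'cV[C]_m, 0 <= (adjmx x *m A *m x) 0 0.

(* Main.v *)
Require Import Defs.
From HB Require Import structures.
From mathcomp Require Import all_boot all_order all_algebra all_fingroup.
From mathcomp Require Import ring.
Import Order.TTheory GRing.Theory Num.Theory.
Local Open Scope ring_scope.
Set Warnings "-notation-overridden,-ambiguous-paths".

Lemma adjmxE (C : numClosedFieldType) p q (A : 'M[C]_(p, q)) :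
  adjmx A = (A ^t*)%sesqui.
Proof. by apply/matrixP => i j; rewrite !mxE. Qed.

Lemma gram (C : numClosedFieldType) m (A : 'M[C]_m) : psdmx A ->
  exists (P : 'M[C]_m) (d : 'rV[C]_m), (forall r, 0 <= d 0 r) /\
    (forall i j, A i j = \sum_r d 0 r * ((P r i)^* * P r j)).
Proof.
move=> [hA pA].
have nA : A \is normalmx.
  by apply/normalmxP; rewrite -adjmxE hA.
have Aeq := orthomx_spectralP nA.
set P := spectralmx A in Aeq; set d := spectral_diag A in Aeq.
have uP : P \is unitarymx by exact: spectral_unitarymx.
rewrite invmx_unitary // in Aeq.
exists P, d; split.
  move=> r; have := pA ((P ^t*)%sesqui *m delta_mx r 0).
  rewrite adjmxE !trmx_mul !map_mxM trmxCK Aeq.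
  have PP : P *m (P ^t*)%sesqui = 1%:M by apply/unitarymxP.
  rewrite -!mulmxA !(mulmxA P (P ^t*)%sesqui) PP !mul1mx -colE.
  rewrite !mxE (bigD1 r) //= big1 ?addr0.
    by rewrite !mxE !eqxx /= mulr1n rmorph1 mul1r.
  move=> k /negbTE kr; rewrite !mxE kr /= rmorph0 mul0r //.
move=> i j; rewrite Aeq mul_mx_diag !mxE; apply: eq_bigr => r _; rewrite !mxE.
by rewrite (mulrC _ (d 0 r)) mulrA.
Qed.

Lemma N_ge0 (C : numClosedFieldType) m (F : 'I_m -> 'M[C]_m) :
  (forall i, psdmx (F i)) ->
  0 <= \sum_(s : 'S_m) \sum_(t : 'S_m) \prod_i F i (s i) (t i).
Proof.
move=> hF.
have [P hP] := fin_all_exists (fun i => @gram _ _ _ (hF i)).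
have [d hd] := fin_all_exists hP.
have E : forall s t : 'S_m, \prod_i F i (s i) (t i) =
   \sum_(h : {ffun 'I_m -> 'I_m}) (\prod_i d i 0 (h i)) *
      ((\prod_i (P i (h i) (s i))^*) * \prod_i P i (h i) (t i)).
  move=> s t; rewrite (eq_bigr _ (fun i _ => (hd i).2 (s i) (t i))).
  rewrite bigA_distr_bigA; apply: eq_bigr => h _; rewrite !big_split //.
have -> : \sum_(s : 'S_m) \sum_(t : 'S_m) \prod_i F i (s i) (t i) =
   \sum_(h : {ffun 'I_m -> 'I_m}) (\prod_i d i 0 (h i)) *
      ((\sum_(s : 'S_m) \prod_i P i (h i) (s i))^* *
       (\sum_(t : 'S_m) \prod_i P i (h i) (t i))).
  under eq_bigr => s _ do under eq_bigr => t _ do rewrite E.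
  under eq_bigr => s _ do rewrite exchange_big.
  rewrite exchange_big; apply: eq_bigr => h _.
  rewrite rmorph_sum mulr_suml mulr_sumr; apply: eq_bigr => s _.
  rewrite mulr_sumr mulr_sumr; apply: eq_bigr => t _.
  by rewrite rmorph_prod.
apply: sumr_ge0 => h _; apply: mulr_ge0.
  by apply: prodr_ge0 => i _; exact: (hd i).1.
by rewrite mulrC mul_conjC_ge0.
Qed.

Lemma perm_double (R : comNzRingType) m (X : 'M[R]_m) :
  \sum_(s : 'S_m) \sum_(t : 'S_m) \prod_i X (s i) (t i) = m`!%:R * permanent X.
Proof.
have H : forall s : 'S_m, \sum_(t : 'S_m) \prod_i X (s i) (t i) = permanent X.
  move=> s; rewrite /permanent (reindex_inj (mulgI s)); apply: eq_bigr => t _.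
  rewrite [RHS](reindex_inj (@perm_inj _ s)); apply: eq_bigr => i _.
  by rewrite permM.
by rewrite (eq_bigr _ (fun s _ => H s)) sumr_const card_Sn mulr_natl.
Qed.

Lemma expand (R : comNzRingType) m n (w : 'I_n -> R) (F : 'I_n -> 'M[R]_m) :
  m`!%:R * permanent (\matrix_(i,j) \sum_k w k * F k i j) =
  \sum_(c : {ffun 'I_m -> 'I_n}) (\prod_t w (c t)) *
     \sum_(s : 'S_m) \sum_(t : 'S_m) \prod_i F (c i) (s i) (t i).
Proof.
rewrite -perm_double.
have E : forall s t : 'S_m,
   \prod_i (\matrix_(i,j) \sum_k w k * F k i j : 'M[R]_m) (s i) (t i) =
   \sum_(c : {ffun 'I_m -> 'I_n}) (\prod_t w (c t)) * \prod_i F (c i) (s i) (t i).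
  move=> s t; under eq_bigr => i _ do rewrite mxE.
  by rewrite bigA_distr_bigA; apply: eq_bigr => c _; rewrite big_split.
under eq_bigr => s _ do under eq_bigr => t _ do rewrite E.
under eq_bigr => s _ do rewrite exchange_big.
rewrite exchange_big; apply: eq_bigr => c _.
rewrite mulr_sumr; apply: eq_bigr => s _; rewrite mulr_sumr //.
Qed.
Lemma prod_bool (R : comNzRingType) m (b : 'I_m -> bool) :
  \prod_(t < m) ((b t)%:R : R) = ([forall t, b t])%:R.
Proof.
case: (boolP [forall t, b t]) => H.
  by rewrite big1 // => t _; rewrite (forallP H).
move: H => /forallPn [t /negbTE bt]; rewrite (bigD1 t) //= bt mul0r //.
Qed.

Lemma forall_andb (T : finType) (p q : pred T) :
  [forall t, p t && q t] = [forall t, p t] && [forall t, q t].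
Proof.
apply/forallP/andP => [H|[/forallP H1 /forallP H2] t].
  by split; apply/forallP => t; case/andP: (H t).
by rewrite H1 H2.
Qed.

Section Main.
Variables (C : numClosedFieldType) (m : nat) (A1 A2 A3 : 'M[C]_m).
Definition F3 (k : 'I_3) : 'M[C]_m :=
  match val k with 0 => A1 | 1 => A2 | _ => A3 end.
Definition Mw (b : nat -> bool) : 'M[C]_m :=
  \matrix_(i,j) \sum_k (b (val k))%:R * F3 k i j.
Lemma Mw_eq (b : nat -> bool) :
  Mw b = (b 0%N)%:R *: A1 + (b 1%N)%:R *: A2 + (b 2%N)%:R *: A3.
Proof.
by apply/matrixP => i j; rewrite !mxE !big_ord_recr big_ord0 /= add0r /F3 /=.
Qed.

Lemma Mw_per (b : nat -> bool) :
  m`!%:R * permanent (Mw b) = \sum_(c : {ffun 'I_m -> 'I_3})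
    ([forall t, b (val (c t))])%:R *
     \sum_(s : 'S_m) \sum_(t : 'S_m) \prod_i F3 (c i) (s i) (t i).
Proof.
rewrite /Mw (@expand _ _ _ (fun k : 'I_3 => ((b (val k))%:R : C))).
by apply: eq_bigr => c _; rewrite (@prod_bool _ _ (fun t => b (val (c t)))).
Qed.

Lemma N3_ge0 : psdmx A1 -> psdmx A2 -> psdmx A3 -> forall c : {ffun 'I_m -> 'I_3},
  0 <= \sum_(s : 'S_m) \sum_(t : 'S_m) \prod_i F3 (c i) (s i) (t i).
Proof.
move=> h1 h2 h3 c; apply: (@N_ge0 _ _ (fun i => F3 (c i))) => i.
by rewrite /F3; case: (val (c i)) => [|[|]].
Qed.

End Main.

Definition Bc {m} (c : 'I_m -> 'I_3) (b0 b1 b2 : bool) :=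
  [forall t, (if val (c t) is 0 then b0 else if val (c t) is 1 then b1 else b2)].

Lemma coef_ge0 (C : numClosedFieldType) m (c : 'I_m -> 'I_3) :
  0 <= ((Bc c true true true)%:R + (Bc c true false false)%:R + (Bc c false true false)%:R
        + (Bc c false false true)%:R - ((Bc c true true false)%:R + (Bc c true false true)%:R
        + (Bc c false true true)%:R) : C).
Proof.
have E1 : Bc c true false false = Bc c true true false && Bc c true false true.
  by rewrite /Bc -forall_andb; apply: eq_forallb => t; case: (val (c t)) => [|[|]].
have E2 : Bc c false true false = Bc c true true false && Bc c false true true.
  by rewrite /Bc -forall_andb; apply: eq_forallb => t; case: (val (c t)) => [|[|]].
have E3 : Bc c false false true = Bc c true false true && Bc c false true true.
  by rewrite /Bc -forall_andb; apply: eq_forallb => t; case: (val (c t)) => [|[|]].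
have E0 : Bc c true true true by apply/forallP => t; rewrite /Bc; case: (val (c t)) => [|[|]].
rewrite E1 E2 E3 E0.
case: (Bc c true true false); case: (Bc c true false true); case: (Bc c false true true);
  by rewrite -!natrD subr_ge0 ler_nat.
Qed.


Theorem corollary3p3 (C : numClosedFieldType) (m : nat) (A1 A2 A3 : 'M[C]_m) :
  psdmx A1 -> psdmx A2 -> psdmx A3 ->
  permanent (A1 + A2) + permanent (A1 + A3) + permanent (A2 + A3)
  <= permanent (A1 + A2 + A3) + permanent A1 + permanent A2 + permanent A3.
Proof.
move=> h1 h2 h3.
pose Mb (b0 b1 b2 : bool) := @Mw C m A1 A2 A3 (fun k => if k is 0 then b0 else if k is 1 then b1 else b2).
have E : forall b0 b1 b2, Mb b0 b1 b2 = b0%:R *: A1 + b1%:R *: A2 + b2%:R *: A3.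
  by move=> b0 b1 b2; rewrite /Mb Mw_eq.
have e123 : A1 + A2 + A3 = Mb true true true by rewrite E !scale1r.
have e12 : A1 + A2 = Mb true true false by rewrite E !scale1r scale0r addr0.
have e13 : A1 + A3 = Mb true false true by rewrite E !scale1r scale0r addr0.
have e23 : A2 + A3 = Mb false true true by rewrite E !scale1r scale0r add0r.
have e1 : A1 = Mb true false false by rewrite E !scale1r !scale0r !addr0.
have e2 : A2 = Mb false true false by rewrite E !scale1r !scale0r addr0 add0r.
have e3 : A3 = Mb false false true by rewrite E !scale1r !scale0r !add0r.
rewrite e123 e12 e13 e23 e1 e2 e3.
rewrite -subr_ge0 -(@pmulr_rge0 _ (m`!%:R)); last by rewrite ltr0n fact_gt0.
rewrite mulrBr !mulrDr /Mb !Mw_per -!big_split -sumrB /=.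
apply: sumr_ge0 => c _.
rewrite -!mulrDl -mulrBl; apply: mulr_ge0; last exact: N3_ge0.
exact: (@coef_ge0 C m c).
Qed.
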